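(* Let $\mathcal G$ be a topological $2$-group, $X$ a topological space, $\mathcal U=\{U_i\}_{i\in I}$ an open cover of $X$ and $c=(\mathbf x,\mathbf e)$ a $\mathcal G$-valued Čech cocycle subordinate to $\mathcal U$. Then the functor $\pi_c\colon P_c\to\overline X$ defined below is a principal $\mathcal G$-bundle over $X$ admitting $\mathcal U$ as a trivializing cover.
   Context: Groupoids internal to a category are written $P=(P_1\rightrightarrows P_0)$ with source $s$, target $t$, and product $g*h$ (defined when $t(g)=s(h)$, meaning ''first $g$ then $h$''). A topological $2$-space is a groupoid internal to topological spaces; a topological space $X$ gives $\overline X=(X\rightrightarrows X)$. A topological $2$-group $\mathcal G=(\mathcal G_1\rightrightarrows\mathcal G_0)$ is a groupoid internal to topological groups; then $g*h=h1_{t(g)^{-1}}g$, $\bar g=1_{s(g)}g^{-1}1_{t(g)}$. Let $\mathcal E=\mathrm{Ker}(s)\subset\mathcal G_1$, with $\mathcal G_0$ acting by ${}^xe=1_xe1_{x^{-1}}$. A $\mathcal G$-$2$-space is a topological $2$-space with a continuous strict right action functor of $\mathcal G$; a $\mathcal G$-functor is a $\mathcal G$-equivariant continuous functor; a $\mathcal G$-pseudo-inverse of a $\mathcal G$-functor $f\colon P\to Q$ is a $\mathcal G$-functor $g$ with $\mathcal G_0$-equivariant continuous natural isomorphisms $gf\Rightarrow\mathrm{id}_P$, $\mathrm{id}_Q\Rightarrow fg$; a $\mathcal G$-equivalence is a $\mathcal G$-functor having one. For a continuous functor $\pi\colon P\to\overline X$ from a $\mathcal G$-$2$-space, a trivializing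 chart is $(U,\psi,\phi,\varepsilon)$ with $U\subset X$ open, $\psi\colon P|_U\to\overline U\times\mathcal G$ a $\mathcal G$-equivalence, $\phi$ a $\mathcal G$-pseudo-inverse, $\varepsilon\colon\phi\psi\Rightarrow\mathrm{id}$ a $\mathcal G_0$-equivariant continuous natural isomorphism, with $\mathrm{pr}_1\psi=\pi|_U$ and $\pi|_U\phi=\mathrm{pr}_1$ ($P|_U$ the full subgroupoid on objects over $U$). An atlas is a family of trivializing charts whose $U$'s cover $X$; its cover is a trivializing cover. A principal $\mathcal G$-bundle over $X$ is such a $\pi$ admitting an atlas. Write $U_{i_1\cdots i_n}=U_{i_1}\cap\dots\cap U_{i_n}$. A $\mathcal G$-valued Čech cocycle subordinate to $\mathcal U$ is a pair of families of continuous maps $\mathbf x_{ij}\colon U_{ij}\to\mathcal G_0$, $\mathbf e_{ijk}\colon U_{ijk}\to\mathcal E$ with $t(\mathbf e_{ijk})\mathbf x_{ij}\mathbf x_{jk}=\mathbf x_{ik}$ on $U_{ijk}$ and $\mathbf e_{ikl}\mathbf e_{ijk}=\mathbf e_{ijl}\,{}^{\mathbf x_{ij}}\mathbf e_{jkl}$ on $U_{ijkl}$. The $2$-space $P_c$: $P_0=\coprod_iU_i\times\mathcal G_0$ (elements $(u,x)_i$), $P_1=\coprod_{i,j}U_{ij}\times\mathcal G_1$ (elements $(v,g)_{ij}$), $s((v,g)_{ij})=(v,s(g))_i$, $t((v,g)_{ij})=(v,\mathbf x_{ij}(v)^{-1}t(g))_j$, product $(v,g)_{ij}*(v,h)_{jk}=(v,\mathbf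 e_{ijk}(v)(g*(1_{\mathbf x_{ij}(v)}h)))_{ik}$, units $1_{(u,x)_i}=(u,\mathbf e_{iii}(u)^{-1}1_x)_{ii}$, inverses $\overline{(v,g)_{ij}}=(v,1_{\mathbf x_{ij}(v)^{-1}}\mathbf e_{iji}(v)^{-1}\mathbf e_{iii}(v)^{-1}\bar g)_{ji}$; right action $(u,x)_i\cdot y=(u,xy)_i$, $(v,g)_{ij}\cdot h=(v,gh)_{ij}$; and $\pi_c((u,x)_i)=u$, $\pi_c((v,g)_{ij})=v$. *)

(* Defs.v *)
From HB Require Import structures.
From mathcomp Require Import all_boot all_order all_algebra.
From mathcomp Require Import monoid.
From mathcomp Require Import all_classical all_reals topology.

Set Implicit Arguments.
Unset Strict Implicit.
Unset Printing Implicit Defensive.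

Local Open Scope classical_set_scope.
Local Open Scope group_scope.

HB.mixin Record Group_isTopological (G : Type) of Group G & Topological G := {
  mulg_continuous : continuous (fun p : G * G => p.1 * p.2);
  invg_continuous : continuous (fun x : G => x^-1) }.

#[short(type="topGroupType")]
HB.structure Definition TopGroup :=
  {G of Group_isTopological G & Group G & Topological G}.

Definition is_ghom (G H : topGroupType) (f : G -> H) : Prop :=
  forall x y : G, f (x * y) = f x * f y.

(* Objects live in [obD : set O], arrows in [arD : set A]; all structure    *)
(* maps are total functions but only their behaviour on the domains counts. *)
(* [cmp f g] is the product f * g, "first f then g" (defined if tgt f =     *)
(* src g); [inv f] is the inverse arrow.                                    *)

Definition composable {O A : Type} (arD : set A) (src tgt : A -> O) : set (A * A) :=
  [set p | arD p.1 /\ arD p.2 /\ tgt p.1 = src p.2].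

Definition groupoid_ax {O A : Type} (obD : set O) (arD : set A)
  (src tgt : A -> O) (idn : O -> A) (cmp : A -> A -> A) (inv : A -> A) : Prop :=
  (forall f, arD f -> obD (src f) /\ obD (tgt f)) /\
  (forall p, obD p -> arD (idn p)) /\
  (forall f g, composable arD src tgt (f, g) -> arD (cmp f g)) /\
  (forall f, arD f -> arD (inv f)) /\
  (forall p, obD p -> src (idn p) = p /\ tgt (idn p) = p) /\
  (forall f g, composable arD src tgt (f, g) ->
     src (cmp f g) = src f /\ tgt (cmp f g) = tgt g) /\
  (forall f g h, composable arD src tgt (f, g) -> composable arD src tgt (g, h) ->
     cmp (cmp f g) h = cmp f (cmp g h)) /\
  (forall f, arD f -> cmp (idn (src f)) f = f /\ cmp f (idn (tgt f)) = f) /\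
  (forall f, arD f -> src (inv f) = tgt f /\ tgt (inv f) = src f /\
     cmp f (inv f) = idn (src f) /\ cmp (inv f) f = idn (tgt f)).

Definition groupoid_cont {O A : topologicalType} (obD : set O) (arD : set A)
  (src tgt : A -> O) (idn : O -> A) (cmp : A -> A -> A) (inv : A -> A) : Prop :=
  {within arD, continuous src} /\ {within arD, continuous tgt} /\
  {within obD, continuous idn} /\
  {within composable arD src tgt, continuous (fun p : A * A => cmp p.1 p.2)} /\
  {within arD, continuous inv}.

Record top2group := Top2Group {
  G0 : topGroupType;
  G1 : topGroupType;
  gsrc : G1 -> G0;
  gtgt : G1 -> G0;
  gid : G0 -> G1;
  gcomp : G1 -> G1 -> G1;       (* g * h : first g then h *)
  ginv : G1 -> G1 }.

Definition is_top2group (G : top2group) : Prop :=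
  groupoid_ax setT setT (@gsrc G) (@gtgt G) (@gid G) (@gcomp G) (@ginv G) /\
  groupoid_cont setT setT (@gsrc G) (@gtgt G) (@gid G) (@gcomp G) (@ginv G) /\
  is_ghom (@gsrc G) /\ is_ghom (@gtgt G) /\ is_ghom (@gid G) /\ is_ghom (@ginv G) /\
  (forall g h g' h' : G1 G, gtgt g = gsrc h -> gtgt g' = gsrc h' ->
     gcomp (g * g') (h * h') = gcomp g h * gcomp g' h').

(* conjugation action of G0 on E = Ker s :  ^x e = 1_x e 1_{x^-1} *)
Definition gact (G : top2group) (x : G0 G) (e : G1 G) : G1 G :=
  gid x * e * gid x^-1.

(* Objects: the subspace [obD] of [Ob]; arrows: the subspace [arD] of [Ar]. *)

Record sp2 := SP2 {
  Ob : topologicalType; Ar : topologicalType;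
  obD : set Ob; arD : set Ar;
  src : Ar -> Ob; tgt : Ar -> Ob; idn : Ob -> Ar;
  cmp : Ar -> Ar -> Ar; ainv : Ar -> Ar }.

Arguments obD : clear implicits.
Arguments arD : clear implicits.

Definition is_2space (P : sp2) : Prop :=
  groupoid_ax (obD P) (arD P) (@src P) (@tgt P) (@idn P) (@cmp P) (@ainv P) /\
  groupoid_cont (obD P) (arD P) (@src P) (@tgt P) (@idn P) (@cmp P) (@ainv P).

Definition Xbar (X : topologicalType) : sp2 :=
  @SP2 X X setT setT id id id (fun a _ => a) id.

Record fn2 (P Q : sp2) := Fn2 { fob : Ob P -> Ob Q; far : Ar P -> Ar Q }.

Definition fcomp (P Q R : sp2) (F : fn2 P Q) (H : fn2 Q R) : fn2 P R :=
  Fn2 (fun p => fob H (fob F p)) (fun a => far H (far F a)).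

Definition fid (P : sp2) : fn2 P P := Fn2 id id.

Definition is_cfunctor (P Q : sp2) (F : fn2 P Q) : Prop :=
  (forall p, obD P p -> obD Q (fob F p)) /\
  (forall a, arD P a -> arD Q (far F a)) /\
  (forall a, arD P a -> src (far F a) = fob F (src a) /\ tgt (far F a) = fob F (tgt a)) /\
  (forall p, obD P p -> far F (idn p) = idn (fob F p)) /\
  (forall a b, composable (arD P) (@src P) (@tgt P) (a, b) ->
     far F (cmp a b) = cmp (far F a) (far F b)) /\
  {within obD P, continuous (fob F)} /\ {within arD P, continuous (far F)}.

(* continuous natural transformations th : F => F'  (automatically natural *)
(* isomorphisms, all arrows of a groupoid being invertible)               *)
Definition is_natiso (P Q : sp2) (F F' : fn2 P Q) (th : Ob P -> Ar Q) : Prop :=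
  (forall p, obD P p -> arD Q (th p) /\ src (th p) = fob F p /\ tgt (th p) = fob F' p) /\
  (forall a, arD P a -> cmp (far F a) (th (tgt a)) = cmp (th (src a)) (far F' a)) /\
  {within obD P, continuous th}.

Record Gsp2 (G : top2group) := GSP2 {
  gsp :> sp2;
  act0 : Ob gsp -> G0 G -> Ob gsp;
  act1 : Ar gsp -> G1 G -> Ar gsp }.

Definition is_G2space (G : top2group) (P : Gsp2 G) : Prop :=
  is_2space P /\
  (forall p x, obD P p -> obD P (act0 p x)) /\
  (forall a g, arD P a -> arD P (act1 a g)) /\
  (forall a g, arD P a ->
     src (act1 a g) = act0 (src a) (gsrc g) /\ tgt (act1 a g) = act0 (tgt a) (gtgt g)) /\
  (forall p x, obD P p -> act1 (idn p) (gid x) = idn (act0 p x)) /\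
  (forall a b g h, composable (arD P) (@src P) (@tgt P) (a, b) -> gtgt g = gsrc h ->
     act1 (cmp a b) (gcomp g h) = cmp (act1 a g) (act1 b h)) /\
  (forall p, obD P p -> act0 p 1 = p) /\
  (forall p x y, obD P p -> act0 (act0 p x) y = act0 p (x * y)) /\
  (forall a, arD P a -> act1 a 1 = a) /\
  (forall a g h, arD P a -> act1 (act1 a g) h = act1 a (g * h)) /\
  {within obD P `*` setT, continuous (fun q : Ob P * G0 G => act0 q.1 q.2)} /\
  {within arD P `*` setT, continuous (fun q : Ar P * G1 G => act1 q.1 q.2)}.

Definition is_Gfunctor (G : top2group) (P Q : Gsp2 G) (F : fn2 P Q) : Prop :=
  is_cfunctor F /\
  (forall p x, obD P p -> fob F (act0 p x) = act0 (fob F p) x) /\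
  (forall a g, arD P a -> far F (act1 a g) = act1 (far F a) g).

Definition is_G0equivariant (G : top2group) (P Q : Gsp2 G) (th : Ob P -> Ar Q) : Prop :=
  forall p x, obD P p -> th (act0 p x) = act1 (th p) (gid x).

Definition is_Gpseudo_inverse (G : top2group) (P Q : Gsp2 G)
  (f : fn2 P Q) (g : fn2 Q P) : Prop :=
  is_Gfunctor g /\
  exists (th : Ob P -> Ar P) (et : Ob Q -> Ar Q),
    is_natiso (fcomp f g) (fid P) th /\ is_G0equivariant (P:=P) (Q:=P) th /\
    is_natiso (fid Q) (fcomp g f) et /\ is_G0equivariant (P:=Q) (Q:=Q) et.

Definition is_Gequivalence (G : top2group) (P Q : Gsp2 G) (f : fn2 P Q) : Prop :=
  is_Gfunctor f /\ exists g : fn2 Q P, is_Gpseudo_inverse f g.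

Definition restr (X : topologicalType) (G : top2group) (P : Gsp2 G)
  (pi : fn2 P (Xbar X)) (U : set X) : Gsp2 G :=
  @GSP2 G (@SP2 (Ob P) (Ar P)
             (obD P `&` [set p | U (fob pi p)])
             (arD P `&` [set a | U (fob pi (src a)) /\ U (fob pi (tgt a))])
             (@src P) (@tgt P) (@idn P) (@cmp P) (@ainv P))
        (@act0 G P) (@act1 G P).

Definition trivG (X : topologicalType) (G : top2group) (U : set X) : Gsp2 G :=
  @GSP2 G (@SP2 (X * G0 G)%type (X * G1 G)%type (U `*` setT) (U `*` setT)
             (fun a => (a.1, gsrc a.2)) (fun a => (a.1, gtgt a.2))
             (fun p => (p.1, gid p.2)) (fun a b => (a.1, gcomp a.2 b.2))
             (fun a => (a.1, ginv a.2)))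
        (fun p x => (p.1, p.2 * x)) (fun a g => (a.1, a.2 * g)).

Definition is_chart (X : topologicalType) (G : top2group) (P : Gsp2 G)
  (pi : fn2 P (Xbar X)) (U : set X)
  (psi : fn2 (restr pi U) (trivG G U)) (phi : fn2 (trivG G U) (restr pi U))
  (eps : Ob P -> Ar P) : Prop :=
  open U /\
  is_G2space (restr pi U) /\ is_G2space (trivG G U) /\
  is_Gequivalence psi /\ is_Gpseudo_inverse psi phi /\
  is_natiso (fcomp psi phi) (fid (restr pi U)) eps /\
  is_G0equivariant (P:=restr pi U) (Q:=restr pi U) eps /\
  (forall p, obD (restr pi U) p -> (fob psi p).1 = fob pi p) /\
  (forall a, arD (restr pi U) a -> (far psi a).1 = far pi a) /\
  (forall q, obD (trivG G U) q -> fob pi (fob phi q) = q.1) /\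
  (forall b, arD (trivG G U) b -> far pi (far phi b) = b.1).

Definition is_trivializing_cover (X : topologicalType) (G : top2group) (P : Gsp2 G)
  (pi : fn2 P (Xbar X)) (J : Type) (V : J -> set X) : Prop :=
  (forall x : X, exists j, V j x) /\
  (forall j, exists psi phi eps, @is_chart X G P pi (V j) psi phi eps).

Definition is_principal_bundle (X : topologicalType) (G : top2group) (P : Gsp2 G)
  (pi : fn2 P (Xbar X)) : Prop :=
  is_G2space P /\ is_cfunctor pi /\
  exists (J : Type) (V : J -> set X), is_trivializing_cover pi V.

Definition is_cech_cocycle (X : topologicalType) (G : top2group) (I : Type)
  (U : I -> set X) (xx : I -> I -> X -> G0 G) (ee : I -> I -> I -> X -> G1 G) : Prop :=
  (forall i j, {within U i `&` U j, continuous (xx i j)}) /\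
  (forall i j k, {within U i `&` U j `&` U k, continuous (ee i j k)}) /\
  (forall i j k v, (U i `&` U j `&` U k) v -> gsrc (ee i j k v) = 1) /\
  (forall i j k v, (U i `&` U j `&` U k) v ->
     gtgt (ee i j k v) * xx i j v * xx j k v = xx i k v) /\
  (forall i j k l v, (U i `&` U j `&` U k `&` U l) v ->
     ee i k l v * ee i j k v = ee i j l v * gact (xx i j v) (ee j k l v)).

(* P_0 = coprod_i U_i x G_0, realised as the open subspace                  *)
(* {((i,u),x) | u in U_i} of I_discrete x X x G_0;                          *)
(* P_1 = coprod_{i,j} U_ij x G_1, realised as {(((i,j),v),g) | v in U_ij}.   *)
Definition Pc (X : topologicalType) (G : top2group) (I : choiceType)
  (U : I -> set X) (xx : I -> I -> X -> G0 G) (ee : I -> I -> I -> X -> G1 G) : Gsp2 G :=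
  @GSP2 G
    (@SP2 ((discrete_topology I * X) * G0 G)%type
          ((discrete_topology (I * I) * X) * G1 G)%type
      [set o | U o.1.1 o.1.2]
      [set a | U a.1.1.1 a.1.2 /\ U a.1.1.2 a.1.2]
      (fun a => ((a.1.1.1, a.1.2), gsrc a.2))
      (* t((v,g)_ij) = (v, x_ij(v)^-1 t g)_j *)
      (fun a => ((a.1.1.2, a.1.2), (xx a.1.1.1 a.1.1.2 a.1.2)^-1 * gtgt a.2))
      (* 1_{(u,x)_i} = (u, e_iii(u)^-1 1_x)_ii *)
      (fun o => (((o.1.1, o.1.1), o.1.2), (ee o.1.1 o.1.1 o.1.1 o.1.2)^-1 * gid o.2))
      (* (v,g)_ij * (v,h)_jk = (v, e_ijk(v) (g * (1_{x_ij(v)} h)))_ik *)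
      (fun a b => (((a.1.1.1, b.1.1.2), a.1.2),
                   ee a.1.1.1 a.1.1.2 b.1.1.2 a.1.2 *
                   gcomp a.2 (gid (xx a.1.1.1 a.1.1.2 a.1.2) * b.2)))
      (* inverse: (v, 1_{x_ij(v)^-1} e_iji(v)^-1 e_iii(v)^-1 \bar g)_ji *)
      (fun a => (((a.1.1.2, a.1.1.1), a.1.2),
                 gid (xx a.1.1.1 a.1.1.2 a.1.2)^-1 *
                 (ee a.1.1.1 a.1.1.2 a.1.1.1 a.1.2)^-1 *
                 (ee a.1.1.1 a.1.1.1 a.1.1.1 a.1.2)^-1 * ginv a.2)))
    (fun o y => (o.1, o.2 * y))
    (fun a h => (a.1, a.2 * h)).

Definition pic (X : topologicalType) (G : top2group) (I : choiceType)
  (U : I -> set X) (xx : I -> I -> X -> G0 G) (ee : I -> I -> I -> X -> G1 G)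
  : fn2 (Pc U xx ee) (Xbar X) :=
  @Fn2 (Pc U xx ee) (Xbar X) (fun o => o.1.2) (fun a => a.1.2).

(* Main.v *)
Require Import Defs.
From HB Require Import structures.
From mathcomp Require Import all_boot all_order all_algebra.
From mathcomp Require Import monoid.
From mathcomp Require Import all_classical all_reals topology.

Set Implicit Arguments.
Unset Strict Implicit.
Unset Printing Implicit Defensive.
Local Open Scope classical_set_scope.
Local Open Scope group_scope.


Definition wc {T U : topologicalType} (A : set T) (f : T -> U) :=
  forall x, A x -> f @ within A (nbhs x) --> f x.

Lemma wcP {T U : topologicalType} (A : set T) (f : T -> U) :
  wc A f <-> {within A, continuous f}.
Proof. by rewrite subspace_continuousP. Qed.

Lemma wc_cont {T U : topologicalType} (A : set T) (f : T -> U) :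
  continuous f -> wc A f.
Proof.
move=> cf x Ax; apply: cvg_trans (cf x).
by apply: cvg_app; apply: cvg_within.
Qed.

Lemma wc_pair {T U V : topologicalType} (A : set T) (f : T -> U) (g : T -> V) :
  wc A f -> wc A g -> wc A (fun x => (f x, g x)).
Proof.
move=> cf cg x Ax; exact: (cvg_pair (cf x Ax) (cg x Ax)).
Qed.

Lemma wc_comp {T U V : topologicalType} (A : set T) (B : set U) (f : T -> U) (g : U -> V) :
  wc A f -> (forall x, A x -> B (f x)) -> wc B g -> wc A (fun x => g (f x)).
Proof.
move=> cf AB cg x Ax.
have h : f @ within A (nbhs x) --> within B (nbhs (f x)).
  move=> P HP; have := cf x Ax (fun y => B y -> P y) HP.
  rewrite !nbhs_simpl /= /within /=.
  by apply: filterS => y H Ay; apply: H => //; exact: AB.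
exact: (cvg_comp f g h (cg (f x) (AB x Ax))).
Qed.

Lemma wc_sub {T U : topologicalType} (A B : set T) (f : T -> U) :
  B `<=` A -> wc A f -> wc B f.
Proof.
move=> BA cf x Bx; apply: cvg_trans (cf x (BA x Bx)).
by apply: cvg_app; apply: within_subset.
Qed.

Lemma wc_loc {T U : topologicalType} (A : set T) (f : T -> U) :
  (forall x, A x -> exists N (g : T -> U), nbhs x N /\
     (forall y, A y -> N y -> f y = g y) /\ wc (A `&` N) g) -> wc A f.
Proof.
move=> H x Ax; have [N [g [Nx [fg cg]]]] := H x Ax.
have Ex : f x = g x by apply: fg => //; exact: nbhs_singleton.
rewrite Ex.
have h1 : f @ within A (nbhs x) --> g @ within A (nbhs x).
  apply: near_eq_cvg; rewrite /= /within /=; move: Nx; apply: filterS.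
  by move=> y Ny Ay; rewrite fg.
apply: cvg_trans h1 _.
have h2 : within A (nbhs x) --> within (A `&` N) (nbhs x).
  move=> P; rewrite !nbhs_simpl /= /within /= => HP.
  by apply: filterS2 Nx HP => y Ny HP Ay; apply: HP.
apply: cvg_trans (cg x (conj Ax (nbhs_singleton Nx))).
exact: cvg_app h2.
Qed.

Lemma fst_cont {T U : topologicalType} : continuous (@fst T U).
Proof. by move=> p; apply: cvg_fst. Qed.
Lemma snd_cont {T U : topologicalType} : continuous (@snd T U).
Proof. by move=> p; apply: cvg_snd. Qed.

Lemma disc_nbhs {T : topologicalType} (I : choiceType) (f : T -> discrete_topology I) x :
  continuous f -> nbhs x [set y | f y = f x].
Proof. by move=> cf; exact: (cf x [set f x] (discrete_set1 _)). Qed.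

Lemma wc_eq {T U : topologicalType} (A : set T) (f g : T -> U) :
  (forall y, A y -> f y = g y) -> wc A g -> wc A f.
Proof.
move=> fg cg; apply: wc_loc => x Ax; exists setT, g; split; first exact: filterT.
split; first by move=> y Ay _; exact: fg.
by apply: wc_sub cg => y [].
Qed.

Lemma wc_split {T U : topologicalType} (K : choiceType) (A : set T) (f : T -> U)
  (ix : T -> discrete_topology K) :
  continuous ix -> (forall k, wc (A `&` [set y | ix y = k]) f) -> wc A f.
Proof.
move=> cix H; apply: wc_loc => x Ax; exists [set y | ix y = ix x], f; split.
  exact: disc_nbhs.
by split => // y.
Qed.

Lemma wc_cst {T U : topologicalType} (A : set T) (c : U) : wc A (fun _ => c).
Proof. by apply: wc_cont => x; apply: cvg_cst. Qed.

Lemma wc_id {T : topologicalType} (A : set T) : wc A (fun x => x).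
Proof. by apply: wc_cont => x; apply: cvg_id. Qed.

Lemma wc_fst {T U V : topologicalType} (A : set T) (f : T -> U * V) :
  wc A f -> wc A (fun x => (f x).1).
Proof.
move=> cf; apply: (@wc_comp _ _ _ A setT f (@fst U V)) => //.
exact: wc_cont fst_cont.
Qed.

Lemma wc_snd {T U V : topologicalType} (A : set T) (f : T -> U * V) :
  wc A f -> wc A (fun x => (f x).2).
Proof.
move=> cf; apply: (@wc_comp _ _ _ A setT f (@snd U V)) => //.
exact: wc_cont snd_cont.
Qed.

Lemma cont_fst_comp {T U V : topologicalType} (f : T -> U * V) :
  continuous f -> continuous (fun x => (f x).1).
Proof. by move=> cf x; exact: (@continuous_comp _ _ _ f fst x (cf x) (@fst_cont U V (f x))). Qed.
Lemma cont_snd_comp {T U V : topologicalType} (f : T -> U * V) :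
  continuous f -> continuous (fun x => (f x).2).
Proof. by move=> cf x; exact: (@continuous_comp _ _ _ f snd x (cf x) (@snd_cont U V (f x))). Qed.
Lemma cont_id {T : topologicalType} : continuous (fun x : T => x).
Proof. by move=> x; apply: cvg_id. Qed.

Lemma wc_compT {T U V : topologicalType} (A : set T) (f : T -> U) (g : U -> V) :
  wc A f -> wc setT g -> wc A (fun x => g (f x)).
Proof. by move=> cf cg; apply: wc_comp cf _ cg. Qed.

Lemma wc_mul {T : topologicalType} {H : topGroupType} (A : set T) (f g : T -> H) :
  wc A f -> wc A g -> wc A (fun x => f x * g x).
Proof.
move=> cf cg; apply: (@wc_compT _ _ _ A (fun x => (f x, g x)) (fun p : H * H => p.1 * p.2)).
  exact: wc_pair.
exact/wc_cont/mulg_continuous.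
Qed.

Lemma wc_inv {T : topologicalType} {H : topGroupType} (A : set T) (f : T -> H) :
  wc A f -> wc A (fun x => (f x)^-1).
Proof.
move=> cf; apply: (@wc_compT _ _ _ A f (fun p : H => p^-1)) => //.
exact/wc_cont/invg_continuous.
Qed.


Lemma ghom1 (A B : topGroupType) (f : A -> B) : is_ghom f -> f 1 = 1.
Proof.
move=> hf; apply: (@mulIg _ (f 1)); rewrite mul1g -hf mul1g //.
Qed.

Lemma ghomV (A B : topGroupType) (f : A -> B) x : is_ghom f -> f x^-1 = (f x)^-1.
Proof.
move=> hf; apply: (@mulIg _ (f x)); rewrite mulVg -hf mulVg ghom1 //.
Qed.

Ltac gnorm := rewrite ?(invgM, invgK, invg1, mulgA, mulgK, mulgVK, mulgV, mulVg, mul1g, mulg1).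

Section TwoGroup.
Variable G : top2group.
Hypothesis HG : is_top2group G.
Local Notation s := (@gsrc G).
Local Notation t := (@gtgt G).
Local Notation u := (@gid G).
Local Notation c := (@gcomp G).

Lemma sM a b : s (a * b) = s a * s b. Proof. by case: HG => _ [_ [h _]]; apply h. Qed.
Lemma tM a b : t (a * b) = t a * t b. Proof. by case: HG => _ [_ [_ [h _]]]; apply h. Qed.
Lemma uM a b : u (a * b) = u a * u b. Proof. by case: HG => _ [_ [_ [_ [h _]]]]; apply h. Qed.
Lemma s1 : s 1 = 1. Proof. by apply: ghom1 => a b; apply: sM. Qed.
Lemma t1 : t 1 = 1. Proof. by apply: ghom1 => a b; apply: tM. Qed.
Lemma u1 : u 1 = 1. Proof. by apply: ghom1 => a b; apply: uM. Qed.
Lemma sV a : s a^-1 = (s a)^-1. Proof. by apply: ghomV => ? ?; apply: sM. Qed.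
Lemma tV a : t a^-1 = (t a)^-1. Proof. by apply: ghomV => ? ?; apply: tM. Qed.
Lemma uV a : u a^-1 = (u a)^-1. Proof. by apply: ghomV => ? ?; apply: uM. Qed.

Lemma su x : s (u x) = x.
Proof. by case: HG => [[_ [_ [_ [_ [h _]]]]] _]; case: (h x I). Qed.
Lemma tu x : t (u x) = x.
Proof. by case: HG => [[_ [_ [_ [_ [h _]]]]] _]; case: (h x I). Qed.

Lemma lunit h : c (u (s h)) h = h.
Proof. by case: HG => [[_ [_ [_ [_ [_ [_ [_ [h1 _]]]]]]]] _]; case: (h1 h I). Qed.
Lemma runit g : c g (u (t g)) = g.
Proof. by case: HG => [[_ [_ [_ [_ [_ [_ [_ [h1 _]]]]]]]] _]; case: (h1 g I). Qed.

Lemma g_interchange g h g' h' : t g = s h -> t g' = s h' ->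
  c (g * g') (h * h') = c g h * c g' h'.
Proof. by case: HG => _ [_ [_ [_ [_ [_ H1]]]]]; apply: H1. Qed.

Lemma cE g h : t g = s h -> c g h = g * (u (t g))^-1 * h.
Proof.
move=> tgsh.
set a := g * (u (t g))^-1.
have ta : t a = 1 by rewrite /a tM tV tu mulgV.
have -> : c g h = c (a * u (t g)) (1 * h) by rewrite /a mulgVK mul1g.
rewrite g_interchange; last first.
- by rewrite tu.
- by rewrite ta s1.
have ca1 : c a 1 = a by rewrite -u1 -ta runit.
by rewrite ca1 tgsh lunit.
Qed.

Lemma peif e k : s e = 1 -> t k = 1 -> e * k = k * e.
Proof.
move=> se tk.
have h1 : c (k * 1) (1 * e) = c k 1 * c 1 e by rewrite g_interchange // ?tk ?s1 ?t1 ?se.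
have h2 : c (1 * k) (e * 1) = c 1 e * c k 1 by rewrite g_interchange // ?tk ?s1 ?t1 ?se.
have ck1 : c k 1 = k by rewrite -u1 -tk runit.
have c1e : c 1 e = e by rewrite -u1 -se lunit.
rewrite mulg1 mul1g ck1 c1e in h1; rewrite mulg1 mul1g ck1 c1e in h2.
by rewrite -h2 h1.
Qed.

Lemma conjE w e : s e = 1 -> w * e * w^-1 = u (t w) * e * (u (t w))^-1.
Proof.
move=> se.
set y := u (t w).
set k := w * y^-1.
have tk : t k = 1 by rewrite /k /y tM tV tu mulgV.
have wE : w = k * y by rewrite /k mulgVK.
set z := y * e * y^-1.
have sz : s z = 1 by rewrite /z /y !sM sV su se mulg1 mulgV.
rewrite [in LHS]wE invgM !mulgA.
have -> : k * y * e * y^-1 * k^-1 = k * z * k^-1 by rewrite /z !mulgA.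
by rewrite -(peif sz tk) mulgK.
Qed.


Lemma cPc g h x : x^-1 * t g = s h -> c g (u x * h) = g * (u (s h))^-1 * h.
Proof.
move=> E; have tg : t g = x * s h by rewrite -E mulVKg.
rewrite cE; last by rewrite sM su.
by rewrite tg uM invgM !mulgA mulgVK.
Qed.

Lemma invE g : ginv g = u (t g) * g^-1 * u (s g).
Proof.
case: HG => [[_ [_ [_ [_ [_ [_ [_ [_ H1]]]]]]]] _]; case: (H1 g I) => sg [tg [cg _]].
move: cg; rewrite cE ?sg // => cg.
by rewrite -cg !mulgA mulgVK mulgV mul1g.
Qed.

Lemma conjE' w e : s e = 1 -> w * e = u (t w) * e * (u (t w))^-1 * w.
Proof. by move=> se; rewrite -conjE // mulgVK. Qed.

Lemma A_act e a b g h x : x^-1 * t a = s b -> t g = s h ->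
  (e * c a (u x * b)) * c g h = e * c (a * g) (u x * (b * h)).
Proof.
move=> E tg.
have E' : x^-1 * t (a * g) = s (b * h) by rewrite tM sM mulgA E tg.
rewrite (cPc E) (cPc E') (cE tg) sM uM.
set k := (u (s b))^-1 * b.
set w := g * (u (t g))^-1.
have sk : s k = 1 by rewrite /k sM sV su mulVg.
have tw : t w = 1 by rewrite /w tM tV tu mulgV.
transitivity (e * a * (k * w) * h); first by rewrite /k /w; gnorm.
by rewrite (peif sk tw) /k /w tg; gnorm.
Qed.

Section Cocycle.
Variables (X : topologicalType) (I : Type) (U : I -> set X)
  (xx : I -> I -> X -> G0 G) (ee : I -> I -> I -> X -> G1 G).
Hypothesis HC : is_cech_cocycle U xx ee.
Variable v : X.

Lemma C1 i j k : U i v -> U j v -> U k v -> s (ee i j k v) = 1.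
Proof. by case: HC => _ [_ [H1 _]] *; apply: H1. Qed.
Lemma C2 i j k : U i v -> U j v -> U k v ->
  t (ee i j k v) * xx i j v * xx j k v = xx i k v.
Proof. by case: HC => _ [_ [_ [H1 _]]] *; apply: H1. Qed.
Lemma C3 i j k l : U i v -> U j v -> U k v -> U l v ->
  ee i k l v * ee i j k v = ee i j l v * (u (xx i j v) * ee j k l v * (u (xx i j v))^-1).
Proof. by case: HC => _ [_ [_ [_ H1]]] *; rewrite -uV; apply: H1. Qed.

Lemma T1 i : U i v -> t (ee i i i v) * xx i i v = 1.
Proof. by move=> Ui; apply: (@mulIg _ (xx i i v)); rewrite mul1g C2. Qed.

Lemma E2 i j : U i v -> U j v ->
  ee i j j v = u (xx i j v) * ee j j j v * (u (xx i j v))^-1.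
Proof. by move=> Ui Uj; apply: (@mulgI _ (ee i j j v)); rewrite C3. Qed.

Lemma E1 i j : U i v -> U j v -> ee i i j v = ee i i i v.
Proof.
move=> Ui Uj.
have h : ee i i i v = u (xx i i v) * ee i i j v * (u (xx i i v))^-1.
  by apply: (@mulgI _ (ee i i j v)); rewrite C3.
have xE : xx i i v = t (ee i i i v)^-1.
  by rewrite tV; apply: (@mulgI _ (t (ee i i i v))); rewrite mulgV T1.
move: h; rewrite xE -conjE ?C1 // invgK => h.
have : ee i i i v * ee i i i v = ee i i j v * ee i i i v.
  by rewrite {2}h !mulgA mulgV mul1g.
by move/mulIg.
Qed.


Section Ind.
Variables (i j k l : I) (Ui : U i v) (Uj : U j v) (Uk : U k v) (Ul : U l v).

Lemma tE g h x : x^-1 * t g = s h -> t g = x * s h.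
Proof. by move=> E; rewrite -E mulVKg. Qed.

Lemma A_idn_s x : s ((ee i i i v)^-1 * u x) = x.
Proof. by rewrite sM sV su C1 //; gnorm. Qed.

Lemma teiii : (t (ee i i i v))^-1 = xx i i v.
Proof. by apply: (@mulgI _ (t (ee i i i v))); rewrite mulgV T1. Qed.

Lemma A_idn_t x : (xx i i v)^-1 * t ((ee i i i v)^-1 * u x) = x.
Proof. by rewrite tM tV tu teiii; gnorm. Qed.

Lemma A_cmp_s g h : (xx i j v)^-1 * t g = s h ->
  s (ee i j k v * c g (u (xx i j v) * h)) = s g.
Proof. by move=> E; rewrite cPc // !sM sV su C1 //; gnorm. Qed.

Lemma A_cmp_t g h : (xx i j v)^-1 * t g = s h ->
  (xx i k v)^-1 * t (ee i j k v * c g (u (xx i j v) * h)) = (xx j k v)^-1 * t h.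
Proof.
move=> E; rewrite cPc // !tM tV tu (tE E) -(C2 Ui Uj Uk); gnorm; done.
Qed.

Lemma A_lunit g : ee i i j v * c ((ee i i i v)^-1 * u (s g)) (u (xx i i v) * g) = g.
Proof.
rewrite cPc; last by rewrite tM tV tu teiii; gnorm.
by rewrite E1 //; gnorm.
Qed.

Lemma A_runit g :
  ee i j j v * c g (u (xx i j v) * ((ee j j j v)^-1 * u ((xx i j v)^-1 * t g))) = g.
Proof.
rewrite cPc; last by rewrite sM sV su C1 //; gnorm.
rewrite sM sV su C1 //; gnorm.
set y := (xx i j v)^-1 * t g.
set w := g * (u y)^-1.
have tw : t w = xx i j v by rewrite /w tM tV tu /y; gnorm.
have key : w * (ee j j j v)^-1 = u (xx i j v) * (ee j j j v)^-1 * (u (xx i j v))^-1 * w.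
  by rewrite conjE' ?sV ?C1 ?invg1 // tw.
transitivity (ee i j j v * (w * (ee j j j v)^-1) * u y).
  by rewrite /w; gnorm.
by rewrite key E2 // /w; gnorm.
Qed.

Let inv' g := u (xx i j v)^-1 / ee i j i v / ee i i i v * ginv g.

Lemma A_inv_s g : s (inv' g) = (xx i j v)^-1 * t g.
Proof. by rewrite /inv' invE !sM !sV !su !C1 //; gnorm. Qed.

Lemma A_inv_t g : (xx j i v)^-1 * t (inv' g) = s g.
Proof.
rewrite /inv' invE !tM !tV !tu teiii // -(C2 Ui Uj Ui); gnorm; done.
Qed.

Lemma A_inv_r g : ee i j i v * c g (u (xx i j v) * inv' g) = (ee i i i v)^-1 * u (s g).
Proof.
rewrite cPc; last by rewrite A_inv_s.
rewrite A_inv_s /inv' invE.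
set E := (ee i j i v)^-1 * (ee i i i v)^-1.
set w := g * (u (t g))^-1.
have tw : t w = 1 by rewrite /w tM tV tu mulgV.
have sE : s E = 1 by rewrite /E sM !sV !C1 //; gnorm.
have key : w * E = E * w by rewrite conjE' // tw u1; gnorm.
transitivity (ee i j i v * (w * E) * (u (t g) * g^-1 * u (s g))).
  by rewrite /w /E !uM !uV; gnorm.
by rewrite key /w /E; gnorm.
Qed.

Lemma A_inv_l g : ee j i j v * c (inv' g) (u (xx j i v) * g) =
  (ee j j j v)^-1 * u ((xx i j v)^-1 * t g).
Proof.
rewrite cPc; last by rewrite A_inv_t.
have H : ee i i i v * ee i j i v =
    u (xx i j v) * ee j j j v * ee j i j v * (u (xx i j v))^-1.
  by rewrite -{1}(E1 Ui Uj) C3 // E2 //; gnorm.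
have key : (ee i j i v)^-1 * (ee i i i v)^-1 =
    u (xx i j v) * (ee j i j v)^-1 * (ee j j j v)^-1 * (u (xx i j v))^-1.
  by rewrite -invgM H; gnorm.
transitivity (ee j i j v * (u (xx i j v))^-1 *
   ((ee i j i v)^-1 * (ee i i i v)^-1) * u (t g)).
  by rewrite /inv' invE uV; gnorm.
by rewrite key uM uV; gnorm.
Qed.


Lemma A_psi_s g : s (ee i j k v * u (xx i j v) * g) = xx i j v * s g.
Proof. by rewrite !sM su C1 //; gnorm. Qed.

Lemma A_psi_t g : t (ee i j k v * u (xx i j v) * g) = xx i k v * ((xx j k v)^-1 * t g).
Proof. by rewrite !tM tu -(C2 Ui Uj Uk); gnorm. Qed.

Lemma A_psi_idn x : ee i j j v * u (xx i j v) * ((ee j j j v)^-1 * u x) = u (xx i j v * x).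
Proof. by rewrite E2 // uM; gnorm. Qed.

Lemma A_psi_cmp g h : (xx j k v)^-1 * t g = s h ->
  ee i j l v * u (xx i j v) * (ee j k l v * c g (u (xx j k v) * h)) =
  c (ee i j k v * u (xx i j v) * g) (ee i k l v * u (xx i k v) * h).
Proof.
move=> E.
rewrite [RHS]cE; last by rewrite A_psi_t !sM su C1 // E; gnorm.
rewrite A_psi_t (cPc E) E.
set w := u (xx i j v) * g * (u (s h))^-1.
set z := (u (xx i k v))^-1 * ee i k l v * u (xx i k v).
have tw : t w = xx i j v * xx j k v by rewrite /w !tM tV !tu (tE E); gnorm.
have sz : s z = 1 by rewrite /z !sM sV su C1 //; gnorm.
have key : u (xx i j v * xx j k v) * z * (u (xx i j v * xx j k v))^-1 =
    (ee i j k v)^-1 * ee i k l v * ee i j k v.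
  have te : t (ee i j k v) = xx i k v * (xx i j v * xx j k v)^-1 by rewrite -(C2 Ui Uj Uk); gnorm.
  rewrite -[X in _ = _ * X](invgK (ee i j k v)) [RHS]conjE ?sV ?C1 ?invg1 // tV te /z; gnorm; rewrite !uM !uV; gnorm; done.
transitivity (ee i j k v * (w * z) * h); last by rewrite /w /z ?uM ?uV; gnorm.
rewrite (conjE' w sz) tw key.
transitivity (ee i k l v * ee i j k v * w * h); last by gnorm.
by rewrite C3 // /w; gnorm.
Qed.

Lemma A_phi_cmp g h : t g = s h ->
  (ee i i i v)^-1 * c g h =
  ee i i i v * c ((ee i i i v)^-1 * g) (u (xx i i v) * ((ee i i i v)^-1 * h)).
Proof.
move=> tg.
rewrite cPc; last by rewrite tM tV teiii !sM sV C1 // tg; gnorm.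
rewrite (cE tg) !sM sV C1 //; gnorm.
set w := g * (u (s h))^-1.
have tw : t w = 1 by rewrite /w tM tV tu tg mulgV.
have se : s (ee i i i v)^-1 = 1 by rewrite sV C1 // invg1.
transitivity ((ee i i i v)^-1 * w * h); first by rewrite /w tg; gnorm.
by rewrite -(peif se tw) /w; gnorm.
Qed.

Lemma A_th_nat g :
  ee i i k v * c ((ee i i i v)^-1 * (ee i j k v * u (xx i j v) * g))
       (u (xx i i v) * u (xx i k v * ((xx j k v)^-1 * t g))) =
  ee i j k v * c (u (xx i j v * s g)) (u (xx i j v) * g).
Proof.
rewrite cE; last by rewrite !tM tV teiii !tu -(C2 Ui Uj Uk) !sM !su; gnorm.
rewrite cE; last by rewrite tu sM su.
rewrite E1 // !tM tV teiii !tu -(C2 Ui Uj Uk) !uM !uV; gnorm; done.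
Qed.

End Ind.

Lemma A_et_nat i (Ui : U i v) g :
  c g ((ee i i i v)^-1 * u (t g)) =
  c ((ee i i i v)^-1 * u (s g)) (ee i i i v * u (xx i i v) * ((ee i i i v)^-1 * g)).
Proof.
rewrite cE; last by rewrite sM sV C1 // su; gnorm.
rewrite cE; last by rewrite tM tV teiii // tu !sM sV C1 // su; gnorm.
rewrite tM tV teiii // tu.
set e := ee i i i v.
set w := g * (u (t g))^-1.
have tw : t w = 1 by rewrite /w tM tV tu mulgV.
have se : s e^-1 = 1 by rewrite sV C1 // invg1.
have key : (u (xx i i v))^-1 * e * u (xx i i v) = e.
  have xE : xx i i v = (t e)^-1 by rewrite /e teiii.
  rewrite xE uV invgK -conjE ?C1 //; gnorm; done.
transitivity (w * e^-1 * u (t g)); first by rewrite /w; gnorm.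
rewrite -(peif se tw) /w.
transitivity (e^-1 * g); first by gnorm; done.
transitivity (e^-1 * ((u (xx i i v))^-1 * e * u (xx i i v)) * e^-1 * g).
  by rewrite key; gnorm; done.
by rewrite uM; gnorm; done.
Qed.

Lemma A_assoc i j k l (Ui : U i v) (Uj : U j v) (Uk : U k v) (Ul : U l v) g h m :
  (xx i j v)^-1 * t g = s h -> (xx j k v)^-1 * t h = s m ->
  ee i k l v * c (ee i j k v * c g (u (xx i j v) * h)) (u (xx i k v) * m) =
  ee i j l v * c g (u (xx i j v) * (ee j k l v * c h (u (xx j k v) * m))).
Proof.
move=> E E'.
have E2' : (xx i k v)^-1 * t (ee i j k v * c g (u (xx i j v) * h)) = s m.
  by rewrite (A_cmp_t Ui Uj Uk E).
have E3 : (xx i j v)^-1 * t g = s (ee j k l v * c h (u (xx j k v) * m)).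
  by rewrite (A_cmp_s Uj Uk Ul E').
rewrite (cPc E2') (cPc E3) (A_cmp_s Uj Uk Ul E') (cPc E) (cPc E').
set w := g * (u (s h))^-1.
have tw : t w = xx i j v by rewrite /w tM tV tu (tE E) mulgK.
have key : w * ee j k l v = u (xx i j v) * ee j k l v * (u (xx i j v))^-1 * w.
  by rewrite conjE' ?C1 // tw.
set r := h * (u (s m))^-1 * m.
transitivity (ee i k l v * ee i j k v * w * r).
  by rewrite /w /r; gnorm.
transitivity (ee i j l v * (w * ee j k l v) * r); last by rewrite /w /r; gnorm.
by rewrite C3 // key; gnorm.
Qed.

End Cocycle.

End TwoGroup.


Section GW.
Variable G : top2group.
Hypothesis HG : is_top2group G.
Local Notation s := (@gsrc G).
Local Notation t := (@gtgt G).
Local Notation u := (@gid G).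
Local Notation c := (@gcomp G).
Lemma Gcont : groupoid_cont setT setT s t u c (@ginv G).
Proof. by case: HG => _ []. Qed.

Lemma wc_gs {T : topologicalType} (A : set T) f : wc A f -> wc A (fun x => s (f x)).
Proof. by move=> cf; apply: wc_compT cf _; apply/wcP; case: Gcont. Qed.
Lemma wc_gt {T : topologicalType} (A : set T) f : wc A f -> wc A (fun x => t (f x)).
Proof. by move=> cf; apply: wc_compT cf _; apply/wcP; case: Gcont => _ []. Qed.
Lemma wc_gu {T : topologicalType} (A : set T) f : wc A f -> wc A (fun x => u (f x)).
Proof. by move=> cf; apply: wc_compT cf _; apply/wcP; case: Gcont => _ [_ []]. Qed.
Lemma wc_ginv {T : topologicalType} (A : set T) (f : T -> G1 G) : wc A f -> wc A (fun x => ginv (f x)).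
Proof. by move=> cf; apply: wc_compT cf _; apply/wcP; case: Gcont => _ [_ [_ [_]]]. Qed.
Lemma wc_gc {T : topologicalType} (A : set T) f g : wc A f -> wc A g ->
  (forall y, A y -> t (f y) = s (g y)) -> wc A (fun x => c (f x) (g x)).
Proof.
move=> cf cg fg.
apply: (@wc_comp _ _ _ A (composable setT s t) (fun x => (f x, g x)) (fun p => c p.1 p.2)).
- exact: wc_pair.
- by move=> y Ay; split=> //; split => //; apply: fg.
- by apply/wcP; case: Gcont => _ [_ [_ []]].
Qed.

End GW.

Ltac wct HG := repeat first [ apply: wc_pair | apply: wc_mul | apply: wc_inv | apply: wc_id
  | apply: wc_fst | apply: wc_snd | apply: (wc_gs HG) | apply: (wc_gt HG) | apply: (wc_gu HG)
  | apply: (wc_ginv HG) | apply: wc_cst ].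

Section PcSec.
Variable G : top2group.
Hypothesis HG : is_top2group G.
Variables (X : topologicalType) (I : choiceType) (U : I -> set X)
  (xx : I -> I -> X -> G0 G) (ee : I -> I -> I -> X -> G1 G).
Hypothesis HC : is_cech_cocycle U xx ee.
Local Notation s := (@gsrc G).
Local Notation t := (@gtgt G).
Local Notation u := (@gid G).
Local Notation c := (@gcomp G).
Local Notation sM := (sM HG). Local Notation tM := (tM HG). Local Notation uM := (uM HG).
Local Notation s1 := (s1 HG). Local Notation t1 := (t1 HG). Local Notation u1 := (u1 HG).
Local Notation sV := (sV HG). Local Notation tV := (tV HG). Local Notation uV := (uV HG).
Local Notation su := (su HG). Local Notation tu := (tu HG).
Local Notation cE := (cE HG). Local Notation cPc := (cPc HG). Local Notation invE := (invE HG).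
Local Notation conjE := (conjE HG). Local Notation conjE' := (conjE' HG).
Local Notation peif := (peif HG).
Local Notation C1 := (C1 HC). Local Notation C2 := (C2 HG HC). Local Notation C3 := (C3 HG HC).
Local Notation T1 := (T1 HG HC). Local Notation E1 := (E1 HG HC). Local Notation E2 := (E2 HG HC).

Let P := Pc U xx ee.

Lemma Pc_ax : groupoid_ax (obD P) (arD P) (@src P) (@tgt P) (@idn P) (@cmp P) (@ainv P).
Proof.
split; [|split; [|split; [|split; [|split; [|split; [|split; [|split]]]]]]].
- by move=> [[[i j] v] g] /= [Ui Uj].
- by move=> [[i v] x] /= Ui.
- by move=> [[[i j] v] g] [[[j' k] v'] h] /= [[Ui Uj] [[Uj' Uk]]] [? ? E]; subst j' v'.
- by move=> [[[i j] v] g] /= [Ui Uj].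
- move=> [[i v] x] /= Ui.
  by rewrite (A_idn_s HG HC Ui) (A_idn_t HG HC Ui).
- move=> [[[i j] v] g] [[[j' k] v'] h] /= [[Ui Uj] [[Uj' Uk]]] [? ? E]; subst j' v'.
  by rewrite (A_cmp_s HG HC Ui Uj Uk E) (A_cmp_t HG HC Ui Uj Uk E).
- move=> [[[i j] v] g] [[[j' k] v'] h] [[[k' l] v''] m] /= [[Ui Uj] [[Uj' Uk]]] [? ? E] [_ [[Uk' Ul]]] [? ? E']; subst j' v' k' v''.
  by rewrite (A_assoc HG HC Ui Uj Uk Ul E E').
- move=> [[[i j] v] g] /= [Ui Uj].
  by rewrite (A_lunit HG HC Ui Uj) (A_runit HG HC Ui Uj).
- move=> [[[i j] v] g] /= [Ui Uj].
  have := A_inv_s HG HC Ui Uj g; have := A_inv_t HG HC Ui Uj g.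
  have := A_inv_r HG HC Ui Uj g; have := A_inv_l HG HC Ui Uj g.
  move=> /= -> -> -> ->; done.
Qed.

Lemma wc_xx {T : topologicalType} (A : set T) i j f :
  (forall y, A y -> U i (f y) /\ U j (f y)) -> wc A f -> wc A (fun y => xx i j (f y)).
Proof.
move=> H cf; apply: (wc_comp cf) => //; last by apply/wcP; case: HC.
by move=> y /H.
Qed.

Lemma wc_ee {T : topologicalType} (A : set T) i j k f :
  (forall y, A y -> U i (f y) /\ U j (f y) /\ U k (f y)) -> wc A f ->
  wc A (fun y => ee i j k (f y)).
Proof.
move=> H cf; apply: (wc_comp cf); last by apply/wcP; case: HC => _ [].
by move=> y /H [? [? ?]].
Qed.

Lemma Pc_cont : groupoid_cont (obD P) (arD P) (@src P) (@tgt P) (@idn P) (@cmp P) (@ainv P).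
Proof.
split; [|split; [|split; [|split]]]; apply/wcP.
- apply: (@wc_split _ _ _ _ _ (fun a : Ar P => a.1.1)).
    by apply: cont_fst_comp; apply: cont_fst_comp; exact: cont_id.
  move=> [i j]; apply: (@wc_eq _ _ _ _ (fun a : Ar P => ((i, a.1.2), s a.2) : Ob P)).
    by move=> [[[i' j'] v] g] [_ /= [-> _]].
  wct HG.
- apply: (@wc_split _ _ _ _ _ (fun a : Ar P => a.1.1)).
    by apply: cont_fst_comp; apply: cont_fst_comp; exact: cont_id.
  move=> [i j]; apply: (@wc_eq _ _ _ _ (fun a : Ar P => ((j, a.1.2), (xx i j a.1.2)^-1 * t a.2) : Ob P)).
    by move=> [[[i' j'] v] g] [_ /= [-> ->]].
  wct HG; apply: wc_xx; last by wct HG.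
  by move=> [[[i' j'] v] g] [/= [Ui Uj] [? ?]]; subst.
- apply: (@wc_split _ _ _ _ _ (fun a : Ob P => a.1.1)).
    by apply: cont_fst_comp; apply: cont_fst_comp; exact: cont_id.
  move=> i; apply: (@wc_eq _ _ _ _ (fun a : Ob P => ((i, i, a.1.2), (ee i i i a.1.2)^-1 * u a.2) : Ar P)).
    by move=> [[i' v] x] [_ /= ->].
  wct HG; apply: wc_ee; last by wct HG.
  by move=> [[i' v] x] [/= Ui <-].
- apply: (@wc_split _ _ _ _ _ (fun p : Ar P * Ar P => p.1.1.1)).
    by apply: cont_fst_comp; apply: cont_fst_comp; apply: cont_fst_comp; exact: cont_id.
  move=> [i j].
  apply: (@wc_split _ _ _ _ _ (fun p : Ar P * Ar P => p.2.1.1)).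
    by apply: cont_fst_comp; apply: cont_fst_comp; apply: cont_snd_comp; exact: cont_id.
  move=> [j' k].
  apply: (@wc_eq _ _ _ _ (fun p : Ar P * Ar P => (((i, k), p.1.1.2),
     ee i j k p.1.1.2 * c p.1.2 (u (xx i j p.1.1.2) * p.2.2)) : Ar P)).
    move=> [[[[i1 j1] v1] g1] [[[j2 k2] v2] h2]] /= [[[_ [_ [? ? _]]] [? ?]] [? ?]].
    by subst.
  have side : forall y, (composable (arD P) (@src P) (@tgt P)
      `&` [set y | y.1.1.1 = (i, j)] `&` [set y | y.2.1.1 = (j', k)]) y ->
      [/\ y.1.1.1 = (i, j), y.2.1.1 = (j, k), y.2.1.2 = y.1.1.2,
       U i y.1.1.2 /\ U j y.1.1.2 /\ U k y.1.1.2 &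
       t y.1.2 = s (u (xx i j y.1.1.2) * y.2.2)].
    move=> [[[[i1 j1] v1] g1] [[[j2 k2] v2] h2]] /= [[[[Ui Uj] [[Uj' Uk] E]] [? ?]] [? ?]].
    case: E => ? ? E; subst; split => //.
    by rewrite sM su -E mulVKg.
  wct HG.
  + apply: wc_ee; last by wct HG.
    by move=> y /side [_ _ _ ? _].
  + apply: (wc_gc HG).
    * by wct HG.
    * wct HG; apply: wc_xx; last by wct HG.
      by move=> y /side [_ _ _ [? [? ?]] _].
    * by move=> y /side [].
- apply: (@wc_split _ _ _ _ _ (fun a : Ar P => a.1.1)).
    by apply: cont_fst_comp; apply: cont_fst_comp; exact: cont_id.
  move=> [i j]; apply: (@wc_eq _ _ _ _ (fun a : Ar P => ((j, i, a.1.2),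
      u (xx i j a.1.2)^-1 / ee i j i a.1.2 / ee i i i a.1.2 * ginv a.2) : Ar P)).
    by move=> [[[i' j'] v] g] [_ /= [-> ->]].
  wct HG.
  + apply: wc_xx; last by wct HG.
    by move=> [[[i' j'] v] g] [/= [Ui Uj] [? ?]]; subst.
  + apply: wc_ee; last by wct HG.
    by move=> [[[i' j'] v] g] [/= [Ui Uj] [? ?]]; subst.
  + apply: wc_ee; last by wct HG.
    by move=> [[[i' j'] v] g] [/= [Ui Uj] [? ?]]; subst.
Qed.

Lemma Pc_G2 : is_G2space P.
Proof.
split; first by split; [exact: Pc_ax | exact: Pc_cont].
split; first by move=> [[i v] y] x.
split; first by move=> [[[i j] v] g] h.
split.
  by move=> [[[i j] v] g] h /= _; rewrite sM tM mulgA.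
split.
  by move=> [[i v] y] x /= _; rewrite uM mulgA.
split.
  move=> [[[i j] v] a] [[[j' k] v'] b] g h /= [_ [_ [? ? E]]] tg; subst.
  by rewrite (A_act HG _ E tg).
split; first by move=> [[i v] y] /= _; rewrite mulg1.
split; first by move=> [[i v] y] x z /= _; rewrite mulgA.
split; first by move=> [[[i j] v] g] /= _; rewrite mulg1.
split; first by move=> [[[i j] v] g] x z /= _; rewrite mulgA.
split; apply/wcP; wct HG.
Qed.

Lemma pic_cf : is_cfunctor (pic U xx ee).
Proof.
split; first by [].
split; first by [].
split; first by move=> [[[i j] v] g].
split; first by move=> [[i v] x].
split; first by move=> [[[i j] v] g] [[[j' k] v'] h] /= [_ [_ [? ? E]]].
by split; apply/wcP; wct HG.
Qed.

End PcSec.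


Lemma restr_G2 (G : top2group) (X : topologicalType) (P : Gsp2 G)
  (pi : fn2 P (Xbar X)) (W : set X) :
  is_G2space P -> (forall p x, obD P p -> fob pi (act0 p x) = fob pi p) ->
  is_G2space (restr pi W).
Proof.
move=> [[[ax1 [ax2 [ax3 [ax4 [ax5 [ax6 [ax7 [ax8 ax9]]]]]]]] [c1 [c2 [c3 [c4 c5]]]]]
  [a1 [a2 [a3 [a4 [a5 [a6 [a7 [a8 [a9 [ca0 ca1]]]]]]]]]]] hpi.
rewrite /restr /=.
set oD := obD P `&` _; set aD := arD P `&` _.
have aDP : aD `<=` arD P by move=> a [].
have cS : composable aD (@src P) (@tgt P) `<=` composable (arD P) (@src P) (@tgt P).
  by move=> [f g] [/aDP ? [/aDP ? ?]].
split; first split; first split.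
- by move=> f [af [W1 W2]]; have [? ?] := ax1 f af; split; split.
split.
- move=> p [op Wp]; have [H H0] := ax5 p op; split; first exact: ax2.
  by rewrite /= H H0.
split.
- move=> f g cfg; have [H H0] := ax6 f g (cS _ cfg).
  have A3 := ax3 f g (cS _ cfg).
  case: cfg => /= [[af [W1 W2]] [[ag [W3 W4]] _]].
  by split => //=; rewrite H H0.
split.
- move=> f [af [W1 W2]]; have [H [H0 _]] := ax9 f af; split; first exact: ax4.
  by rewrite /= H H0.
split; first by move=> p [op _]; apply: ax5.
split; first by move=> f g /cS; apply: ax6.
split; first by move=> f g h /cS ? /cS ?; apply: ax7.
split; first by move=> f /aDP; apply: ax8.
by move=> f /aDP; apply: ax9.
- split; first by apply: continuous_subspaceW c1.
  split; first by apply: continuous_subspaceW c2.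
  split; first by apply: continuous_subspaceW c3 => p [].
  split; first by apply: continuous_subspaceW c4.
  by apply: continuous_subspaceW c5.
split; first by move=> p x [op Wp]; split; [exact: a1 | rewrite /= hpi].
split.
  move=> a g [aa [W1 W2]]; have [e1 e2] := a3 a g aa; split; first exact: a2.
  have [? ?] := ax1 a aa.
  by rewrite /= e1 e2 !hpi.
split; first by move=> a g /aDP; apply: a3.
split; first by move=> p x [op _]; apply: a4.
split; first by move=> a b g h /cS; apply: a5.
split; first by move=> p [op _]; apply: a6.
split; first by move=> p x y [op _]; apply: a7.
split; first by move=> a /aDP; apply: a8.
split; first by move=> a g h /aDP; apply: a9.
split; first by apply: continuous_subspaceW ca0 => q [[]].
by apply: continuous_subspaceW ca1 => q [[]].
Qed.

Section TrivSec.
Variable G : top2group.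
Hypothesis HG : is_top2group G.
Local Notation s := (@gsrc G).
Local Notation t := (@gtgt G).
Local Notation u := (@gid G).
Local Notation c := (@gcomp G).

Lemma trivG_G2 (X : topologicalType) (W : set X) : is_G2space (trivG G W).
Proof.
have [[ax1 [ax2 [ax3 [ax4 [ax5 [ax6 [ax7 [ax8 ax9]]]]]]]] _] := HG.
split; first split; first split.
- by move=> [v g] [Wv _].
split; first by move=> [v x] [Wv _].
split; first by move=> [v g] [w h] /= [[Wv _] _].
split; first by move=> [v g] [Wv _].
split; first by move=> [v x] /= _; have [-> ->] := ax5 x I.
split.
  move=> [v g] [w h] /= [_ [_ [<- E]]].
  by have [-> ->] := ax6 g h (conj I (conj I E)).
split.
  move=> [v g] [w h] [z m] /= [_ [_ [_ E]]] [_ [_ [_ E']]].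
  by rewrite ax7 //; split => //; split.
split; first by move=> [v g] /= _; have [-> ->] := ax8 g I.
move=> [v g] /= _; have [-> [-> [-> ->]]] := ax9 g I; done.
- split; first by apply/wcP; wct HG.
  split; first by apply/wcP; wct HG.
  split; first by apply/wcP; wct HG.
  split.
    apply/wcP; apply: wc_pair; first by wct HG.
    apply: (wc_gc HG); [by wct HG | by wct HG |].
    by move=> [[v g] [w h]] /= [_ [_ [_ E]]].
  by apply/wcP; wct HG.
split; first by move=> [v x] y [Wv _].
split; first by move=> [v g] h [Wv _].
split; first by move=> [v g] h /= _; rewrite (sM HG) (tM HG).
split; first by move=> [v x] y /= _; rewrite (uM HG).
split.
  move=> [v a] [w b] g h /= [_ [_ [_ E]]] tg.
  by rewrite (g_interchange HG).
split; first by move=> [v x] /= _; rewrite mulg1.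
split; first by move=> [v x] y z /= _; rewrite mulgA.
split; first by move=> [v g] /= _; rewrite mulg1.
split; first by move=> [v g] y z /= _; rewrite mulgA.
by split; apply/wcP; wct HG.
Qed.

End TrivSec.


Section ChartSec.
Variable G : top2group.
Hypothesis HG : is_top2group G.
Variables (X : topologicalType) (I : choiceType) (U : I -> set X)
  (xx : I -> I -> X -> G0 G) (ee : I -> I -> I -> X -> G1 G).
Hypothesis HC : is_cech_cocycle U xx ee.
Variable i0 : I.
Local Notation s := (@gsrc G).
Local Notation t := (@gtgt G).
Local Notation u := (@gid G).
Local Notation c := (@gcomp G).

Local Notation P := (Pc U xx ee).
Local Notation pi := (pic U xx ee).
Local Notation W := (U i0).
Local Notation R := (restr pi W).
Local Notation Q := (trivG G W).

Definition psi : fn2 R Q := @Fn2 R Q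
  (fun o : Ob P => (o.1.2, xx i0 o.1.1 o.1.2 * o.2) : X * G0 G)
  (fun a : Ar P => (a.1.2, ee i0 a.1.1.1 a.1.1.2 a.1.2 * u (xx i0 a.1.1.1 a.1.2) * a.2) : X * G1 G).

Definition phi : fn2 Q R := @Fn2 Q R
  (fun q : X * G0 G => ((i0, q.1), q.2) : Ob P)
  (fun b : X * G1 G => (((i0, i0), b.1), (ee i0 i0 i0 b.1)^-1 * b.2) : Ar P).

Definition th : Ob P -> Ar P := fun o => (((i0, o.1.1), o.1.2), u (xx i0 o.1.1 o.1.2 * o.2)).

Definition et : X * G0 G -> X * G1 G := fun q => (q.1, (ee i0 i0 i0 q.1)^-1 * u q.2).

Lemma psi_F : is_Gfunctor psi.
Proof.
split; last first.
  split; first by move=> [[k v] y] x _ /=; rewrite mulgA.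
  by move=> [[[k l] v] g] h _ /=; rewrite mulgA.
split; first by move=> [[k v] x] /= [Uk Ui].
split; first by move=> [[[k l] v] g] /= [[Uk Ul] [Ui _]].
split.
  move=> [[[k l] v] g] /= [[Uk Ul] [Ui _]].
  by rewrite (A_psi_s HG HC Ui Uk Ul) (A_psi_t HG HC Ui Uk Ul).
split.
  by move=> [[k v] x] /= [Uk Ui]; rewrite (A_psi_idn HG HC Ui Uk).
split.
  move=> [[[k l] v] g] [[[l' m] v'] h] /= [[[Uk Ul] [Ui _]] [[[Ul' Um] _] [? ? E]]]; subst.
  by rewrite (A_psi_cmp HG HC Ui Uk Ul Um E).
split; apply/wcP.
- apply: (@wc_split _ _ _ _ _ (fun a : Ob P => a.1.1)).
    by apply: cont_fst_comp; apply: cont_fst_comp; exact: cont_id.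
  move=> k; apply: (@wc_eq _ _ _ _ (fun a : Ob P => (a.1.2, xx i0 k a.1.2 * a.2) : X * G0 G)).
    by move=> [[k' v] x] [_ /= ->].
  wct HG; apply: (wc_xx HC); last by wct HG.
  by move=> [[k' v] x] [/= [Uk Ui] ?]; subst.
- apply: (@wc_split _ _ _ _ _ (fun a : Ar P => a.1.1)).
    by apply: cont_fst_comp; apply: cont_fst_comp; exact: cont_id.
  move=> [k l]; apply: (@wc_eq _ _ _ _ (fun a : Ar P =>
     (a.1.2, ee i0 k l a.1.2 * u (xx i0 k a.1.2) * a.2) : X * G1 G)).
    by move=> [[[k' l'] v] g] [_ /= [-> ->]].
  wct HG.
  + apply: (wc_ee HC); last by wct HG.
    by move=> [[[k' l'] v] g] [/= [[Uk Ul] [Ui _]] [? ?]]; subst.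
  + apply: (wc_xx HC); last by wct HG.
    by move=> [[[k' l'] v] g] [/= [[Uk Ul] [Ui _]] [? ?]]; subst.
Qed.

Lemma phi_F : is_Gfunctor phi.
Proof.
split; last first.
  split; first by move=> [v y] x _ /=.
  by move=> [v g] h _ /=; rewrite mulgA.
split; first by move=> [v x] /= [Wv _].
split; first by move=> [v g] /= [Wv _].
split.
  move=> [v g] /= [Wv _].
  by rewrite (sM HG) (sV HG) (C1 HC Wv Wv Wv) (tM HG) (tV HG) (teiii HC Wv) invg1 mul1g mulKg.
split; first by move=> [v x] /= [Wv _].
split.
  move=> [v g] [w h] /= [[Wv _] [_ [? E]]]; subst.
  by rewrite (A_phi_cmp HG HC Wv E).
split; apply/wcP; wct HG.
apply: (wc_ee HC); last by wct HG.
by move=> [v g] [/= Wv _].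
Qed.

Lemma th_N : is_natiso (fcomp psi phi) (fid R) th.
Proof.
split.
  move=> [[k v] x] /= [Uk Ui].
  by rewrite (su HG) (tu HG) mulKg.
split.
  move=> [[[k l] v] g] /= [[Uk Ul] [Ui _]].
  by rewrite (A_th_nat HG HC Ui Uk Ul).
apply/wcP.
apply: (@wc_split _ _ _ _ _ (fun a : Ob P => a.1.1)).
  by apply: cont_fst_comp; apply: cont_fst_comp; exact: cont_id.
move=> k; apply: (@wc_eq _ _ _ _ (fun a : Ob P => (((i0, k), a.1.2), u (xx i0 k a.1.2 * a.2)) : Ar P)).
  by move=> [[k' v] x] [_ /= ->].
wct HG; apply: (wc_xx HC); last by wct HG.
by move=> [[k' v] x] [/= [Uk Ui] ?]; subst.
Qed.

Lemma th_E : is_G0equivariant (P:=R) (Q:=R) th.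
Proof. by move=> [[k v] x] y _ /=; rewrite /th /= mulgA (uM HG (xx i0 k v * x) y). Qed.

Lemma et_N : is_natiso (fid Q) (fcomp phi psi) et.
Proof.
split.
  move=> [v x] /= [Wv _].
  by rewrite (A_idn_s HG HC Wv) (tM HG) (tV HG) (teiii HC Wv) (tu HG).
split.
  move=> [v g] /= [Wv _].
  by rewrite (A_et_nat HG HC Wv).
apply/wcP; wct HG; apply: (wc_ee HC); last by wct HG.
by move=> [v x] [/= Wv _].
Qed.

Lemma et_E : is_G0equivariant (P:=Q) (Q:=Q) et.
Proof. by move=> [v x] y _ /=; rewrite /et /= (uM HG) mulgA. Qed.

Lemma chart : open W -> is_chart psi phi th.
Proof.
move=> oW.
have pinv : is_Gpseudo_inverse psi phi.
  split; first exact: phi_F.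
  exists th, et; split; first exact: th_N.
  split; first exact: th_E.
  split; first exact: et_N.
  exact: et_E.
split; first exact: oW.
split; first by apply: restr_G2; [exact: Pc_G2 | by []].
split; first exact: trivG_G2.
split; first by split; [exact: psi_F | exists phi].
split; first exact: pinv.
split; first exact: th_N.
split; first exact: th_E.
by split; [|split; [|split]].
Qed.

End ChartSec.

Unset Implicit Arguments.
Set Strict Implicit.

Theorem lemma5 (G : top2group) (X : topologicalType) (I : choiceType)
  (U : I -> set X) (xx : I -> I -> X -> G0 G) (ee : I -> I -> I -> X -> G1 G) :
  is_top2group G ->
  (forall i, open (U i)) -> (forall x : X, exists i, U i x) ->
  is_cech_cocycle U xx ee ->
  is_principal_bundle (pic U xx ee) /\ is_trivializing_cover (pic U xx ee) U.
Proof.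
move=> HG oU cov HC.
have tc : is_trivializing_cover (pic U xx ee) U.
  split; first exact: cov.
  move=> i; do 3 eexists.
  exact: (chart HG HC (oU i)).
split => //.
split; first exact: Pc_G2.
split; first exact: pic_cf.
by exists I, U.
Qed.
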